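(* For $0<\rho<1$ and integers $k\ge2$ define $$\begin{aligned}a_k(\rho) ={}& \frac{4\sqrt{1+\rho^2}}{9} \binom{\frac{3}{2}}{k+1} (-1)^{k+1} \Big(\frac{2\rho^2}{3(1+\rho^2)}\Big)^{k}+\frac{\sqrt{1+\rho^2}}{3} \binom{\frac{1}{2}}{2k}\Big(\frac{2\rho}{1+\rho^2}\Big)^{2k} -\frac{28}{15\sqrt{1+\rho^2}}\binom{\frac{1}{2}}{2k+2}\Big(\frac{2\rho}{1+\rho^2}\Big)^{2k}\\&+\frac{10\rho^2+1}{15\sqrt{1+\rho^2}}\binom{\frac{1}{2}}{2k+1}\Big(\frac{2\rho}{1+\rho^2}\Big)^{2k} -\frac{\rho\sqrt{1+\rho^2}}{6}\binom{\frac{1}{2}}{2k-1}\Big(\frac{2\rho}{1+\rho^2}\Big)^{2k-1}-\frac{8}{5\sqrt{1+\rho^2}}\binom{\frac{1}{2}}{2k+3}\Big(\frac{2\rho}{1+\rho^2}\Big)^{2k}.\end{aligned}$$ Then $a_k(\rho)<0$ for all integers $k\ge2$ and all $0<\rho<1$.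
   Context: For real $a$ and integer $m\ge0$, $\binom{a}{m}=\frac{a(a-1)\cdots(a-m+1)}{m!}$ is the generalized binomial coefficient. *)

(* Defs.v *)
From Stdlib Require Import Reals Arith.
Open Scope R_scope.

Fixpoint falling (a : R) (m : nat) : R :=
  match m with
  | O => 1
  | S m' => falling a m' * (a - INR m')
  end.

Definition gbinom (a : R) (m : nat) : R := falling a m / INR (fact m).

Definition a_coef (rho : R) (k : nat) : R :=
  let s := sqrt (1 + rho ^ 2) in
  let t := 2 * rho / (1 + rho ^ 2) in
  4 * s / 9 * gbinom (3 / 2) (k + 1) * (-1) ^ (k + 1)
      * (2 * rho ^ 2 / (3 * (1 + rho ^ 2))) ^ k
  + s / 3 * gbinom (1 / 2) (2 * k) * t ^ (2 * k)
  - 28 / (15 * s) * gbinom (1 / 2) (2 * k + 2) * t ^ (2 * k)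
  + (10 * rho ^ 2 + 1) / (15 * s) * gbinom (1 / 2) (2 * k + 1) * t ^ (2 * k)
  - rho * s / 6 * gbinom (1 / 2) (2 * k - 1) * t ^ (2 * k - 1)
  - 8 / (5 * s) * gbinom (1 / 2) (2 * k + 3) * t ^ (2 * k).

(* Main.v *)
Require Import Defs.
From Stdlib Require Import Reals Lra Lia Psatz.
Open Scope R_scope.

Lemma gbinom_S a m : gbinom a (S m) = gbinom a m * (a - INR m) / INR (S m).
Proof.
  unfold gbinom. cbn [falling]. rewrite fact_simpl, mult_INR.
  field. split; [apply INR_fact_neq_0 | apply not_0_INR; lia].
Qed.

Lemma gbinom_0 a : gbinom a 0 = 1.
Proof. unfold gbinom; simpl; field. Qed.

Definition Xk (k : nat) := gbinom (3/2) (k+1) * (-1) ^ (k+1).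
Definition Gk (k : nat) := gbinom (1/2) (2*k-1).

Lemma X_S k : Xk (S k) = Xk k * (INR k - 1/2) / (INR k + 2).
Proof.
  unfold Xk. replace (S k + 1)%nat with (S (k+1)) by lia.
  rewrite gbinom_S. rewrite !S_INR, plus_INR. simpl pow. simpl INR.
  field. pose proof (pos_INR k). lra.
Qed.

Lemma G_S k : (1 <= k)%nat -> Gk (S k) = Gk k * (4*INR k - 3) * (4 * INR k - 1) / (4*INR k * (4 * INR k + 2)).
Proof.
  intro hk. unfold Gk. replace (2 * S k - 1)%nat with (S (S (2*k-1))) by lia.
  rewrite !gbinom_S. rewrite !S_INR, minus_INR, mult_INR by lia. simpl INR.
  apply le_INR in hk. simpl INR in hk.
  field. lra.
Qed.

Lemma G_pos k : (1 <= k)%nat -> 0 < Gk k.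
Proof.
  induction k as [|k IH]; intro hk; [lia|].
  destruct (Nat.eq_dec k 0) as [->|hk0].
  - unfold Gk. simpl. rewrite gbinom_S, gbinom_0. simpl INR. lra.
  - rewrite G_S by lia. assert (h1: (1 <= k)%nat) by lia. apply le_INR in h1. simpl INR in h1.
    specialize (IH ltac:(lia)).
    apply Rdiv_lt_0_compat; [|nra].
    apply Rmult_lt_0_compat; [apply Rmult_lt_0_compat|]; lra.
Qed.

Lemma XG_bound j : 0 < Xk (j+3) /\ Xk (j+3) * (1/3)^(j+3) * (3 * INR (j+3) ^ 2) <= Gk (j+3).
Proof.
  induction j as [|j [IH1 IH2]].
  - simpl plus. unfold Xk, Gk. simpl plus. simpl minus.
    rewrite !gbinom_S, !gbinom_0. simpl INR. simpl pow. split; lra.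
  - replace (S j + 3)%nat with (S (j+3)) by lia.
    rewrite X_S, G_S by lia.
    assert (hK : 3 <= INR (j+3)) by (rewrite plus_INR; simpl INR; pose proof (pos_INR j); lra).
    set (K := INR (j+3)) in *. rewrite S_INR. fold K.
    assert (hg : 0 < Gk (j+3)) by (apply G_pos; lia).
    set (X := Xk (j+3)) in *. set (G := Gk (j+3)) in *.
    set (p := (1/3)^(j+3)) in *.
    assert (hp: 0 < p) by (apply pow_lt; lra).
    simpl pow. fold p.
    split.
    + apply Rdiv_lt_0_compat; nra.
    +
      assert (hr : (K - 1/2) / (K+2) * (1/3) * (K+1)^2 <= (4*K-3)*(4*K-1)/(4*K*(4*K+2)) * K^2).
      { apply Rmult_le_reg_r with (3*(K+2)*(4*K*(4*K+2))); [nra|].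
        field_simplify; [|lra|lra]. assert (h3: 0 <= K^3*(K*K - 9)) by (apply Rmult_le_pos; [apply pow_le|]; nra). assert (h4: 0 <= K^4) by (apply pow_le; lra). assert (h2: 0 <= K^2) by (apply pow_le; lra). nra. }
      assert (E: X * (K - 1 / 2) / (K + 2) * (1 / 3 * p) * (3 * ((K + 1) * ((K + 1) * 1)))
                 = (X * p * (3 * K^2)) * ((K - 1/2)/(K+2) * (1/3) * (K+1)^2) / K^2) by (field; lra).
      rewrite E.
      assert (E2: G * (4 * K - 3) * (4 * K - 1) / (4 * K * (4 * K + 2)) = G * ((4*K-3)*(4*K-1)/(4*K*(4*K+2)) * K^2) / K^2) by (field; lra).
      rewrite E2. apply Rmult_le_compat_r; [apply Rlt_le, Rinv_0_lt_compat; nra|].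
      apply Rmult_le_compat; try lra.
      * assert (0 <= X*p) by nra. assert (0 <= K^2) by nra. nra.
      * assert (0 < (K-1/2)/(K+2)) by (apply Rdiv_lt_0_compat; lra). nra.
Qed.

Definition R2 K := (4*K-3)*(4*K-1)/(4*K*(4*K+2)).
Definition R3 K := R2 K * (4*K+1)/(4*K+4).
Definition R4 K := R3 K * (4*K+3)/(4*K+6).
Definition Bq K u r := - u/3 * ((4*K-3)/(4*K)) + 28/15 * R3 K + (10 * r^2 + 1)/15 * R2 K
   - u^2/12 - 8/5 * R4 K.

Lemma key K u r : 3 <= K -> r^2 = u - 1 -> 8/(27*K^2) + Bq K u r < 0.
Proof.
  intros hK hr.
  set (Bc := (4*K-3)*(K-1)/(3*K*(4*K+2))).
  set (Cc := 28/15 * R3 K - 3/5 * R2 K - 8/5 * R4 K).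
  assert (E1 : Bq K u r = - u^2/12 + Bc * u + Cc).
  { unfold Bq, Bc, Cc, R4, R3, R2. rewrite hr. field. lra. }
  assert (E2 : - u^2/12 + Bc * u <= 3 * Bc^2) by (assert (0 <= (u - 6*Bc)^2) by apply pow2_ge_0; nra).
  set (N := 10848*K - 7216*K^2 + 47344*K^3 + 65824*K^4 - 29824*K^5).
  set (D := 4*K*(4*K+2)^2*(4*K+4)*(4*K+6)*27*K^2).
  assert (E3 : 8/(27*K^2) + Cc + 3 * Bc^2 = N / D).
  { unfold Cc, Bc, N, D, R4, R3, R2. field. lra. }
  assert (hD : 0 < D).
  { unfold D. assert (0 < K^2) by nra. assert (0 < (4*K+2)^2) by nra.
    repeat apply Rmult_lt_0_compat; lra. }
  assert (hN : N < 0).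
  { unfold N. set (j := K - 3). replace K with (j+3) by (unfold j; ring).
    assert (hj : 0 <= j) by (unfold j; lra).
    assert (0 <= j^2) by (apply pow_le; lra).
    assert (0 <= j^3) by (apply pow_le; lra).
    assert (0 <= j^4) by (apply pow_le; lra).
    assert (0 <= j^5) by (apply pow_le; lra).
    ring_simplify. lra. }
  assert (N / D < 0) by (apply Rdiv_neg_pos; lra).
  lra.
Qed.

Theorem lemma6 : forall (k : nat) (rho : R),
  (2 <= k)%nat -> 0 < rho < 1 -> a_coef rho k < 0.
Proof.
  intros k r hk hr.
  assert (HK : 2 <= INR k) by (apply le_INR in hk; simpl INR in hk; lra).
  set (t := 2 * r / (1 + r^2)).
  assert (P1 : t ^ (2*k) = (t^2)^k) by apply pow_mult.
  assert (P2 : t ^ (2*k-1) = (t^2)^k * ((1+r^2)/(2*r))).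
  { assert (Q : t ^ (2*k) = t * t^(2*k-1)).
    { replace (2*k)%nat with (S (2*k-1)) at 1 by lia. reflexivity. }
    rewrite <- P1, Q. unfold t. field. split; nra. }
  assert (P3 : (2 * r^2 / (3 * (1 + r^2)))^k = ((1+r^2)/6)^k * (t^2)^k).
  { rewrite <- Rpow_mult_distr. apply (f_equal (fun x => x^k)). unfold t. field. nra. }
  unfold a_coef. cbv zeta. fold t.
  rewrite P3, P2, P1.
  set (w := (t^2)^k). set (v := ((1+r^2)/6)^k).
  set (m := (2*k-1)%nat).
  assert (Hm : INR m = 2 * INR k - 1) by (unfold m; rewrite minus_INR, mult_INR by lia; simpl INR; ring).
  replace (2*k+3)%nat with (S (S (S (S m)))) by (unfold m; lia).
  replace (2*k+2)%nat with (S (S (S m))) by (unfold m; lia).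
  replace (2*k+1)%nat with (S (S m)) by (unfold m; lia).
  replace (2*k)%nat with (S m) by (unfold m; lia).
  rewrite !gbinom_S. rewrite !S_INR, Hm.
  assert (hu : 0 <= 1 + r^2) by nra.
  set (s := sqrt (1 + r^2)).
  assert (hs : s * s = 1 + r^2) by (apply sqrt_sqrt; exact hu).
  assert (hs0 : 0 < s) by (apply sqrt_lt_R0; nra).
  assert (hw : 0 < w) by (apply pow_lt; unfold t; assert (0 < 2*r/(1+r^2)) by (apply Rdiv_lt_0_compat; nra); nra).
  set (K := INR k) in *.
  set (X := gbinom (3/2) (k+1) * (-1)^(k+1)).
  set (g := gbinom (1/2) m).
  assert (E : forall e, e = w / s * (4 * (s*s) / 9 * X * v + g * Bq K (s*s) r) -> e < 0).
  { intros e ->.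
    assert (hu1 : 1 < s*s < 2) by (rewrite hs; nra).
    assert (hr2 : r^2 = s*s - 1) by (rewrite hs; ring).
    assert (Br : 4*(s*s)/9*X*v + g*Bq K (s*s) r < 0).
    { destruct (Nat.eq_dec k 2) as [Hk2|hk3].
      - assert (HX : X = 1/16).
        { unfold X. rewrite Hk2. change (2+1)%nat with 3%nat. rewrite !gbinom_S, !gbinom_0. simpl INR. simpl pow. field. }
        assert (HG : g = 1/16).
        { unfold g, m. rewrite Hk2. replace (2*2-1)%nat with 3%nat by reflexivity.
          rewrite !gbinom_S, !gbinom_0. simpl INR. field. }
        assert (HK2 : K = 2) by (unfold K; rewrite Hk2; simpl; ring).
        assert (Hv : v = (s*s/6)^2) by (unfold v; rewrite Hk2, hs; reflexivity).
        set (u := s*s) in *.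
        assert (HB : Bq K u r = u/12 - 1/16 - u^2/12).
        { rewrite HK2. unfold Bq, R4, R3, R2. rewrite hr2. field. }
        rewrite HX, HG, Hv, HB. assert (u^3 <= 2*u^2) by nra. assert (0 <= (u - 1)^2) by nra. nra.
      - destruct (XG_bound (k-3)) as [hX hb].
        replace (k-3+3)%nat with k in hX, hb by lia.
        change (Xk k) with X in hX, hb. change (Gk k) with g in hb. fold K in hb.
        assert (hg : 0 < g) by (change g with (Gk k); apply G_pos; lia).
        assert (hK3 : 3 <= K).
        { assert (h3k : (3 <= k)%nat) by lia. apply le_INR in h3k. unfold K. simpl INR in h3k. lra. }
        assert (hv : v <= (1/3)^k) by (unfold v; apply pow_incr; nra).
        assert (hv0 : 0 <= v) by (unfold v; apply pow_le; nra).
        pose proof (key K (s*s) r hK3 hr2) as hkey.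
        set (p := (1/3)^k) in *.
        set (u := s*s) in *.
        set (B := Bq K u r) in *.
        assert (hK2 : 0 < K^2) by nra.
        assert (h1 : X * p <= g / (3 * K^2)).
        { apply Rmult_le_reg_r with (3*K^2); [nra|].
          replace (g / (3 * K^2) * (3 * K^2)) with g by (field; nra). lra. }
        assert (h2 : 4*u/9*X*v <= 4*u/9*(X*p)).
        { rewrite Rmult_assoc. apply Rmult_le_compat_l; [lra|]. apply Rmult_le_compat_l; lra. }
        assert (h3 : 4*u/9*(X*p) <= 8/9 * (g/(3*K^2))).
        { assert (0 <= X*p) by (apply Rmult_le_pos; [lra| unfold p; apply pow_le; lra]).
          assert (0 <= g/(3*K^2)) by (apply Rlt_le, Rdiv_lt_0_compat; lra). nra. }
        assert (h4 : 8/9 * (g/(3*K^2)) = g * (8/(27*K^2))) by (field; lra).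
        nra. }
    assert (0 < w / s) by (apply Rdiv_lt_0_compat; lra).
    nra. }
  apply E. rewrite <- hs. unfold X, Bq, R4, R3, R2. field.
  repeat split; try lra.
Qed.
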